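(* Let $\bar R_m(\varepsilon)$ be defined by $\bar R_1(\varepsilon)=\varepsilon$ and, for $m\ge2$, $\big[(-1)^m(1+\varepsilon)^m+(1+\varepsilon)\big]\bar R_m(\varepsilon)=-(3+\varepsilon)\sum_{j=1}^{m-1}\bar R_j(\varepsilon)\bar R_{m-j}(\varepsilon)$. Then each $\bar R_m$ is analytic at $\varepsilon=0$ and, as $\varepsilon\to0$, $$\bar R_{2m+1}(\varepsilon)=\varepsilon^{m+1}\big(a_m+O(\varepsilon)\big)\quad(m\ge0),\qquad \bar R_{2n}(\varepsilon)=\varepsilon^{n+1}\big(c_n+O(\varepsilon)\big)\quad(n\ge1),$$ where $$a_m=\frac{(-9)^m\,\Gamma(m+\tfrac12)}{\sqrt{\pi}\,m!},\qquad c_n=\frac{(-9)^n}{6}.$$ Equivalently, for $|\tau|<1/3$, $$\sum_{m\ge0}a_m\tau^{2m+1}=\frac{\tau}{\sqrt{1+9\tau^2}},\qquad \sum_{n\ge1}c_n\tau^{2n}=-\frac{3}{2}\,\frac{\tau^2}{1+9\tau^2}.$$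
   Context: The $\bar R_m$ are the coefficient functions of the transseries solution of the static logistic map $y(n+1)=(3+\varepsilon)y(n)(1-y(n))$ about its fixed point $(2+\varepsilon)/(3+\varepsilon)$, normalised by $\bar R_1=\varepsilon$. The coefficient $(-1)^m(1+\varepsilon)^m+(1+\varepsilon)$ is nonzero for $\varepsilon>0$, $m\ge 2$. *)

(* Defs.v *)
From Stdlib Require Import Reals Lra.
From Coquelicot Require Import Coquelicot.
Open Scope R_scope.

(* Gamma at half-integers: Gamma_half m = Γ(m + 1/2),
   via Γ(1/2) = sqrt π and Γ(x+1) = x Γ(x). *)
Fixpoint Gamma_half (m : nat) : R :=
  match m with
  | O => sqrt PI
  | S k => (INR k + / 2) * Gamma_half k
  end.

Definition a_coef (m : nat) : R :=
  (-9) ^ m * Gamma_half m / (sqrt PI * INR (Factorial.fact m)).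

Definition c_coef (n : nat) : R := (-9) ^ n / 6.

Definition is_Rbar_family (Rb : nat -> R -> R) : Prop :=
  (forall e, 0 < e -> Rb 1%nat e = e) /\
  (forall (m : nat) e, (2 <= m)%nat -> 0 < e ->
     ((-1) ^ m * (1 + e) ^ m + (1 + e)) * Rb m e =
     - (3 + e) * sum_f 1 (m - 1) (fun j => Rb j e * Rb (m - j)%nat e)).

(* f is analytic at 0 (from the right, where it is defined): it agrees on
   (0, r) with a convergent power series of positive radius. *)
Definition analytic_at_0 (f : R -> R) : Prop :=
  exists (b : nat -> R) (r : R), 0 < r /\
    Rbar_lt (Finite r) (CV_radius b) /\
    (forall e, 0 < e < r -> f e = PSeries b e).

(* Main.v *)
Require Import Defs.
From Stdlib Require Import Reals Lra Lia Ranalysis5.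
From Coquelicot Require Import Coquelicot.
Open Scope R_scope.

Fixpoint ssum (f : nat -> R) (n : nat) : R :=
  match n with O => 0 | S k => ssum f k + f k end.

Lemma ssum_ext f g n : (forall i, (i < n)%nat -> f i = g i) -> ssum f n = ssum g n.
Proof. induction n; intros H; simpl; auto. rewrite IHn; [rewrite H|]; auto; intros; apply H; lia. Qed.

Lemma ssum_plus f g n : ssum (fun i => f i + g i) n = ssum f n + ssum g n.
Proof. induction n; simpl; [ring|rewrite IHn; ring]. Qed.

Lemma ssum_scal c f n : ssum (fun i => c * f i) n = c * ssum f n.
Proof. induction n; simpl; [ring|rewrite IHn; ring]. Qed.

Lemma ssum_zero n : ssum (fun _ => 0) n = 0.
Proof. induction n; simpl; [ring|rewrite IHn; ring]. Qed.

Lemma ssum_peel f n : ssum f (S n) = f O + ssum (fun i => f (S i)) n.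
Proof. induction n; simpl in *; [ring|]. rewrite IHn. ring. Qed.

Lemma ssum_rev f n : ssum f n = ssum (fun i => f (n - 1 - i)%nat) n.
Proof.
  induction n; auto.
  rewrite (ssum_peel (fun i => f (S n - 1 - i)%nat)). cbn [ssum]. rewrite IHn.
  replace (S n - 1 - 0)%nat with n by lia.
  rewrite Rplus_comm. f_equal. apply ssum_ext. intros i Hi. f_equal. lia.
Qed.

Lemma ssum_split f n : ssum f (2 * n) = ssum (fun p => f (2 * p)%nat) n + ssum (fun p => f (2 * p + 1)%nat) n.
Proof.
  induction n; [simpl; ring|].
  replace (2 * S n)%nat with (S (S (2 * n))) by lia. cbn [ssum]. rewrite IHn.
  replace (2 * n + 1)%nat with (S (2 * n)) by lia. ring.
Qed.

Lemma ssum_sumR f N : sum_f_R0 f N = ssum f (S N).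
Proof. induction N; simpl in *; [ring|rewrite IHN; ring]. Qed.

Lemma ssum_nonneg f n : (forall k, 0 <= f k) -> 0 <= ssum f n.
Proof. intros Hf; induction n; simpl; [lra|]. pose proof (Hf n). lra. Qed.

Lemma ssum_nonneg_le f n i : (forall k, 0 <= f k) -> (i < n)%nat -> f i <= ssum f n.
Proof.
  intros Hf; induction n; intros Hi; [lia|]. simpl.
  destruct (Nat.eq_dec i n).
  - subst. pose proof (ssum_nonneg f n Hf). lra.
  - pose proof (IHn ltac:(lia)). pose proof (Hf n). lra.
Qed.

Lemma ssum_le f g n : (forall i, (i < n)%nat -> f i <= g i) -> ssum f n <= ssum g n.
Proof. induction n; intros H; simpl; [lra|]. pose proof (H n ltac:(lia)). pose proof (IHn ltac:(intros; apply H; lia)). lra. Qed.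

Lemma ssum_abs f n : Rabs (ssum f n) <= ssum (fun i => Rabs (f i)) n.
Proof. induction n; simpl. rewrite Rabs_R0; lra. eapply Rle_trans. apply Rabs_triang. lra. Qed.

Lemma ps_term (a : nat -> R) x k : scal (pow_n x k) (a k) = a k * x ^ k.
Proof. rewrite pow_n_pow. unfold scal; simpl; unfold mult; simpl. ring. Qed.

Lemma lim0_bounded (u : nat -> R) : is_lim_seq u 0 -> exists M, forall n, Rabs (u n) <= M.
Proof.
  intros H. apply is_lim_seq_spec in H. destruct (H (mkposreal 1 Rlt_0_1)) as [N HN]. simpl in HN.
  exists (1 + ssum (fun k => Rabs (u k)) N). intros n.
  assert (0 <= ssum (fun k => Rabs (u k)) N).
  { clear. induction N; simpl; [lra|]. pose proof (Rabs_pos (u N)). lra. }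
  destruct (Compare_dec.le_lt_dec N n) as [h|h].
  - specialize (HN n h). rewrite Rminus_0_r in HN. lra.
  - pose proof (ssum_nonneg_le (fun k => Rabs (u k)) N n (fun k => Rabs_pos _) h). simpl in *. lra.
Qed.

Lemma bounded_radius (a : nat -> R) (y : R) M :
  (forall n, Rabs (a n * y ^ n) <= M) -> Rbar_le (Rabs y) (CV_radius a).
Proof.
  intros H. destruct (CV_radius_bounded a) as [Hub _]. apply Hub.
  exists M. intros n. replace (Rabs (a n * Rabs y ^ n)) with (Rabs (a n * y ^ n)); [apply H|].
  rewrite !Rabs_mult, !RPow_abs, Rabs_Rabsolu. reflexivity. Qed.


Lemma ex_pseries_radius (a : nat -> R) y : ex_pseries a y -> Rbar_le (Rabs y) (CV_radius a).
Proof.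
  intros H. apply ex_series_lim_0 in H. apply lim0_bounded in H. destruct H as [M HM].
  apply bounded_radius with M. intros n. rewrite <- ps_term. apply HM.
Qed.

Definition Ana (g : R -> R) : Prop :=
  exists (a : nat -> R) (r : R), 0 < r /\ Rbar_lt (Finite r) (CV_radius a) /\
    forall x, Rabs x < r -> g x = PSeries a x.

Lemma Rbar_lt_shrink (r r1 : R) (u : Rbar) : r <= r1 -> Rbar_lt (Finite r1) u -> Rbar_lt (Finite r) u.
Proof. intros H1 H2. eapply Rbar_le_lt_trans; [|exact H2]. simpl. exact H1. Qed.

Lemma Ana_ext g h : Ana g -> (forall x, g x = h x) -> Ana h.
Proof. intros [a [r [H1 [H2 H3]]]] E. exists a, r. repeat split; auto. intros. rewrite <- E. auto. Qed.

Lemma Ana_const c : Ana (fun _ => c).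
Proof.
  set (a := fun n => match n with O => c | S _ => 0 end).
  assert (Hr : Rbar_le (Rabs 2) (CV_radius a)).
  { apply bounded_radius with (Rabs c). intros [|n]; simpl.
    - rewrite Rmult_1_r; lra.
    - rewrite Rmult_0_l, Rabs_R0. apply Rabs_pos. }
  rewrite Rabs_pos_eq in Hr by lra.
  exists a, 1. split; [lra|split].
  - eapply Rbar_lt_le_trans; [|exact Hr]. simpl. lra.
  - intros x Hx. rewrite PSeries_decr_1.
    + rewrite (PSeries_ext (PS_decr_1 a) (fun _ => 0)) by (intros; reflexivity).
      rewrite PSeries_const_0. simpl. ring.
    + apply CV_radius_inside. eapply Rbar_lt_le_trans; [|exact Hr]. simpl. lra.
Qed.

Lemma Ana_mulx g : Ana g -> Ana (fun x => x * g x).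
Proof.
  intros [a [r [H1 [H2 H3]]]]. exists (PS_incr_1 a), r. split; auto. split.
  - rewrite CV_radius_incr_1. auto.
  - intros x Hx. rewrite PSeries_incr_1. rewrite H3; auto.
Qed.

Lemma Ana_plus g h : Ana g -> Ana h -> Ana (fun x => g x + h x).
Proof.
  intros [a [r1 [H1 [H2 H3]]]] [b [r2 [K1 [K2 K3]]]].
  set (r := Rmin r1 r2).
  assert (Hr1 : r <= r1) by apply Rmin_l. assert (Hr2 : r <= r2) by apply Rmin_r.
  assert (Hr : 0 < r) by (apply Rmin_pos; auto).
  assert (E : ex_pseries (PS_plus a b) r).
  { apply ex_pseries_plus; apply CV_radius_inside; rewrite Rabs_pos_eq by lra.
    eapply Rbar_lt_shrink; [|exact H2]; lra. eapply Rbar_lt_shrink; [|exact K2]; lra. }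
  apply ex_pseries_radius in E. rewrite Rabs_pos_eq in E by lra.
  exists (PS_plus a b), (r / 2). split; [lra|split].
  - eapply Rbar_lt_le_trans; [|exact E]. simpl. lra.
  - intros x Hx. rewrite PSeries_plus.
    + rewrite H3, K3; auto; lra.
    + apply CV_radius_inside. eapply Rbar_lt_shrink; [|exact H2]. lra.
    + apply CV_radius_inside. eapply Rbar_lt_shrink; [|exact K2]. lra.
Qed.

Lemma Ana_mult g h : Ana g -> Ana h -> Ana (fun x => g x * h x).
Proof.
  intros [a [r1 [H1 [H2 H3]]]] [b [r2 [K1 [K2 K3]]]].
  set (r := Rmin r1 r2).
  assert (Hr1 : r <= r1) by apply Rmin_l. assert (Hr2 : r <= r2) by apply Rmin_r.
  assert (Hr : 0 < r) by (apply Rmin_pos; auto).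
  assert (E : ex_pseries (PS_mult a b) r).
  { apply ex_pseries_mult; rewrite Rabs_pos_eq by lra.
    eapply Rbar_lt_shrink; [|exact H2]; lra. eapply Rbar_lt_shrink; [|exact K2]; lra. }
  apply ex_pseries_radius in E. rewrite Rabs_pos_eq in E by lra.
  exists (PS_mult a b), (r / 2). split; [lra|split].
  - eapply Rbar_lt_le_trans; [|exact E]. simpl. lra.
  - intros x Hx. rewrite PSeries_mult.
    + rewrite H3, K3; auto; lra.
    + eapply Rbar_lt_shrink; [|exact H2]. lra.
    + eapply Rbar_lt_shrink; [|exact K2]. lra.
Qed.

Lemma Ana_scal c g : Ana g -> Ana (fun x => c * g x).
Proof. intros; apply (Ana_mult (fun _ => c)); auto; apply Ana_const. Qed.

Lemma Ana_xpow d g : Ana g -> Ana (fun x => x ^ d * g x).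
Proof.
  intros H; induction d.
  - apply Ana_ext with g; auto. intros; simpl; ring.
  - apply Ana_ext with (fun x => x * (x ^ d * g x)). apply Ana_mulx; auto. intros; simpl; ring.
Qed.

Lemma Ana_id : Ana (fun x => x).
Proof. apply Ana_ext with (fun x => x * 1). apply Ana_mulx, Ana_const. intros; ring. Qed.

Lemma Ana_pow g i : Ana g -> Ana (fun x => g x ^ i).
Proof.
  intros H; induction i.
  - apply Ana_ext with (fun _ => 1). apply Ana_const. intros; simpl; ring.
  - apply Ana_ext with (fun x => g x * g x ^ i). apply Ana_mult; auto. intros; simpl; ring.
Qed.

Lemma Ana_sumR (F : nat -> R -> R) N : (forall i, Ana (F i)) -> Ana (fun x => sum_f_R0 (fun i => F i x) N).
Proof.
  intros H; induction N; simpl; auto.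
  apply (Ana_plus (fun x => sum_f_R0 (fun i => F i x) N) (F (S N))); auto.
Qed.

Lemma Ana_at0 g : Ana g -> exists a, Rbar_lt 0 (CV_radius a) /\ g 0 = a O.
Proof.
  intros [a [r [H1 [H2 H3]]]]. exists a. split.
  - eapply Rbar_lt_shrink; [|exact H2]. lra.
  - rewrite H3, PSeries_0; auto. rewrite Rabs_R0; lra.
Qed.

Lemma Ana_lip g : Ana g -> exists C d, 0 < d /\ forall x, Rabs x < d -> Rabs (g x - g 0) <= C * Rabs x.
Proof.
  intros [a [r [H1 [H2 H3]]]].
  set (f := PSeries (PS_decr_1 a)).
  assert (Hc : continuity_pt f 0).
  { apply PSeries_continuity. rewrite CV_radius_decr_1, Rabs_R0. eapply Rbar_lt_shrink; [|exact H2]. lra. }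
  destruct (Hc 1 ltac:(lra)) as [al [Hal Hf]].
  exists (Rabs (f 0) + 1), (Rmin r al). split; [apply Rmin_pos; auto|].
  intros x Hx. pose proof (Rmin_l r al). pose proof (Rmin_r r al).
  assert (Hg : forall y, Rabs y < r -> g y = a O + y * f y).
  { intros y Hy. rewrite H3 by auto. apply PSeries_decr_1. apply CV_radius_inside. eapply Rbar_lt_shrink; [|exact H2]. lra. }
  rewrite (Hg x) by lra. rewrite (Hg 0) by (rewrite Rabs_R0; lra).
  replace (a O + x * f x - (a O + 0 * f 0)) with (x * f x) by ring.
  rewrite Rabs_mult, Rmult_comm. apply Rmult_le_compat_r; [apply Rabs_pos|].
  assert (Rabs (f x - f 0) <= 1).
  { destruct (Req_dec x 0) as [->|Hx0]. rewrite Rminus_diag, Rabs_R0; lra.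
    left. apply (Hf x). split. split; [exact I| auto]. simpl. unfold R_dist. rewrite Rminus_0_r. lra. }
  pose proof (Rabs_triang_inv (f x) (f 0)). lra.
Qed.

Lemma PSeries_e0 c x : PSeries (fun n => match n with O => c | S _ => 0 end) x = c.
Proof.
  set (a := fun n => match n with O => c | S _ => 0 end).
  assert (Hr : Rbar_le (Rabs (Rabs x + 1)) (CV_radius a)).
  { apply bounded_radius with (Rabs c). intros [|n]; simpl.
    - rewrite Rmult_1_r; lra.
    - rewrite Rmult_0_l, Rabs_R0. apply Rabs_pos. }
  rewrite PSeries_decr_1.
  + rewrite (PSeries_ext (PS_decr_1 a) (fun _ => 0)) by (intros; reflexivity).
    rewrite PSeries_const_0. simpl. ring.
  + apply CV_radius_inside. eapply Rbar_lt_le_trans; [|exact Hr]. simpl.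
    pose proof (Rabs_pos x). rewrite (Rabs_pos_eq (Rabs x + 1)) by lra. lra.
Qed.

Fixpoint invc_aux (a : nat -> R) (n : nat) : nat -> R :=
  match n with
  | O => fun _ => / a O
  | S k => let f := invc_aux a k in
           fun i => if Nat.eqb i (S k) then - / a O * ssum (fun j => a (S j) * f (k - j)%nat) (S k) else f i
  end.
Definition invc a n := invc_aux a n n.

Lemma invc_aux_eq a n i : (i <= n)%nat -> invc_aux a n i = invc a i.
Proof.
  induction n; intros H.
  - replace i with O by lia. reflexivity.
  - destruct (Nat.eq_dec i (S n)) as [->|Hne]; [reflexivity|].
    simpl. replace (Nat.eqb i (S n)) with false. apply IHn; lia.
    symmetry. apply Nat.eqb_neq. auto.
Qed.

Lemma invc_0 a : invc a O = / a O.
Proof. reflexivity. Qed.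

Lemma invc_S a n : invc a (S n) = - / a O * ssum (fun j => a (S j) * invc a (n - j)%nat) (S n).
Proof.
  unfold invc at 1. cbn [invc_aux]. rewrite Nat.eqb_refl. f_equal.
  apply ssum_ext. intros j Hj. f_equal. apply invc_aux_eq. lia.
Qed.

Lemma PS_mult_invc a n : a O <> 0 ->
  PS_mult a (invc a) n = match n with O => 1 | S _ => 0 end.
Proof.
  intros Ha. unfold PS_mult. rewrite ssum_sumR. destruct n.
  - simpl. rewrite invc_0. field. auto.
  - rewrite ssum_peel. rewrite (ssum_ext _ (fun j => a (S j) * invc a (n - j)%nat)).
    + rewrite Nat.sub_0_r, invc_S. field. auto.
    + intros; reflexivity.
Qed.

Lemma geom_le t N : 0 <= t < 1 -> ssum (fun j => t ^ (S j)) N <= t / (1 - t).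
Proof.
  intros Ht.
  assert (E : (1 - t) * ssum (fun j => t ^ (S j)) N = t - t ^ (S N)).
  { induction N; simpl in *. ring. rewrite Rmult_plus_distr_l, IHN. ring. }
  assert (0 <= t ^ S N) by (apply pow_le; lra).
  apply Rmult_le_reg_l with (1 - t); [lra|]. rewrite E. field_simplify; lra.
Qed.

Lemma invc_bound a M r : 0 < r -> 0 <= M -> a O <> 0 ->
  (forall n, Rabs (a n) * r ^ n <= M) ->
  forall n, Rabs (invc a n) <= / Rabs (a O) * ((2 + M / Rabs (a O)) / r) ^ n.
Proof.
  intros Hr HM Ha Hb.
  set (A := Rabs (a O)). assert (HA : 0 < A) by (apply Rabs_pos_lt; auto).
  set (m := M / A). assert (Hm : 0 <= m) by (unfold m; apply Rdiv_le_0_compat; lra).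
  set (q := 2 + m). set (L := q / r).
  assert (HL : 0 < L) by (unfold L, q; apply Rdiv_lt_0_compat; lra).
  assert (strong : forall n k, (k <= n)%nat -> Rabs (invc a k) <= / A * L ^ k).
  2: { intros n; apply (strong n n); lia. }
  induction n; intros k Hk.
  - replace k with O by lia. rewrite invc_0. simpl. rewrite Rabs_inv. fold A. lra.
  - destruct (Nat.eq_dec k (S n)) as [->|Hne]; [|apply IHn; lia].
    rewrite invc_S, Rabs_mult, Rabs_Ropp, Rabs_inv. fold A.
    assert (Hs : Rabs (ssum (fun j => a (S j) * invc a (n - j)%nat) (S n))
                 <= / A * L ^ S n * M * ssum (fun j => (/ q) ^ (S j)) (S n)).
    { eapply Rle_trans. apply ssum_abs.
      rewrite <- ssum_scal. apply ssum_le. intros j Hj.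
      rewrite Rabs_mult.
      assert (Haj : Rabs (a (S j)) <= M / r ^ S j).
      { pose proof (Hb (S j)). assert (0 < r ^ S j) by (apply pow_lt; lra).
        apply Rmult_le_reg_r with (r ^ S j); auto. field_simplify; lra. }
      assert (Hbj : Rabs (invc a (n - j)) <= / A * L ^ (n - j)) by (apply IHn; lia).
      assert (EL : L ^ S n = L ^ (n - j) * L ^ S j) by (rewrite <- pow_add; f_equal; lia).
      assert (Eq : (/ q) ^ S j = / (r ^ S j * L ^ S j)).
      { rewrite <- Rpow_mult_distr. unfold L. rewrite pow_inv. f_equal. f_equal. field. lra. }
      rewrite EL, Eq.
      assert (0 < r ^ S j) by (apply pow_lt; lra). assert (0 < L ^ S j) by (apply pow_lt; lra).
      assert (0 <= L ^ (n - j)) by (apply pow_le; lra).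
      eapply Rle_trans. apply Rmult_le_compat; try apply Rabs_pos; [exact Haj|exact Hbj].
      right. field. split; lra. }
    assert (Hg : ssum (fun j => (/ q) ^ (S j)) (S n) <= / q / (1 - / q)).
    { apply geom_le. unfold q. split. left; apply Rinv_0_lt_compat; lra.
      rewrite <- Rinv_1. apply Rinv_lt_contravar; lra. }
    assert (E2 : / q / (1 - / q) = / (1 + m)) by (unfold q; field; lra).
    rewrite E2 in Hg.
    assert (0 <= / A * L ^ S n * M) by (apply Rmult_le_pos; [apply Rmult_le_pos|]; [left; apply Rinv_0_lt_compat; lra|apply pow_le; lra|lra]).
    assert (Hs2 : Rabs (ssum (fun j => a (S j) * invc a (n - j)%nat) (S n)) <= / A * L ^ S n * M * / (1 + m)).
    { eapply Rle_trans. exact Hs. apply Rmult_le_compat_l; auto. }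
    assert (0 < L ^ S n) by (apply pow_lt; lra).
    apply Rle_trans with (/ A * (/ A * L ^ S n * M * / (1 + m))).
    { apply Rmult_le_compat_l; [left; apply Rinv_0_lt_compat; lra|exact Hs2]. }
    assert (EM : M = m * A) by (unfold m; field; lra).
    rewrite EM. 
    apply Rmult_le_reg_l with (A * (1 + m)); [apply Rmult_lt_0_compat; lra|].
    field_simplify; try lra.
Qed.

Lemma Ana_inv g : Ana g -> g 0 <> 0 -> Ana (fun x => / g x).
Proof.
  intros [a [r [H1 [H2 H3]]]] Hg0.
  assert (Ha0 : g 0 = a O) by (rewrite H3, PSeries_0; auto; rewrite Rabs_R0; lra).
  assert (Ha : a O <> 0) by (rewrite <- Ha0; auto).
  assert (Hin : Rbar_lt (Rabs r) (CV_radius a)) by (rewrite Rabs_pos_eq by lra; auto).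
  destruct (lim0_bounded _ (ex_series_lim_0 _ (CV_disk_inside a r Hin))) as [M HM].
  assert (HM0 : 0 <= M) by (eapply Rle_trans; [apply Rabs_pos|apply (HM O)]).
  assert (Hb : forall n, Rabs (a n) * r ^ n <= M).
  { intros n. specialize (HM n). rewrite Rabs_Rabsolu, Rabs_mult, (Rabs_pos_eq (r ^ n)) in HM; auto.
    apply pow_le; lra. }
  pose proof (invc_bound a M r H1 HM0 Ha Hb) as Hbd.
  set (A := Rabs (a O)) in *. assert (HA : 0 < A) by (apply Rabs_pos_lt; auto).
  set (L := (2 + M / A) / r) in *.
  assert (HL : 0 < L) by (unfold L; apply Rdiv_lt_0_compat; [assert (0 <= M / A) by (apply Rdiv_le_0_compat; lra); lra|lra]).
  assert (Hrb : Rbar_le (Rabs (/ L)) (CV_radius (invc a))).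
  { apply bounded_radius with (/ A). intros n. rewrite Rabs_mult.
    rewrite <- RPow_abs, (Rabs_pos_eq (/ L)) by (left; apply Rinv_0_lt_compat; lra).
    eapply Rle_trans. apply Rmult_le_compat_r; [apply pow_le; left; apply Rinv_0_lt_compat; lra|apply Hbd].
    rewrite Rmult_assoc, <- Rpow_mult_distr, Rinv_r, pow1 by lra. lra. }
  rewrite Rabs_pos_eq in Hrb by (left; apply Rinv_0_lt_compat; lra).
  set (r' := Rmin r (/ L) / 2).
  assert (Hm1 := Rmin_l r (/ L)). assert (Hm2 := Rmin_r r (/ L)).
  assert (Hmp : 0 < Rmin r (/ L)) by (apply Rmin_pos; [lra|apply Rinv_0_lt_compat; lra]).
  exists (invc a), r'. split; [unfold r'; lra|split].
  - eapply Rbar_lt_le_trans; [|exact Hrb]. simpl. unfold r'. lra.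
  - intros x Hx.
    assert (Hxa : Rbar_lt (Rabs x) (CV_radius a)) by (eapply Rbar_lt_shrink; [|exact H2]; unfold r' in Hx; lra).
    assert (Hxb : Rbar_lt (Rabs x) (CV_radius (invc a))) by (eapply Rbar_lt_le_trans; [|exact Hrb]; simpl; unfold r' in Hx; lra).
    pose proof (PSeries_mult a (invc a) x Hxa Hxb) as E.
    rewrite (PSeries_ext _ (fun n => match n with O => 1 | S _ => 0 end)) in E by (intros; apply PS_mult_invc; auto).
    rewrite PSeries_e0 in E. rewrite <- H3 in E by (unfold r' in Hx; lra).
    assert (g x <> 0) by (intros Hz; rewrite Hz in E; lra).
    apply Rmult_eq_reg_l with (g x); auto. rewrite Rinv_r; auto.
Qed.

Definition Germ (K : nat) (F : R -> R) (v : R) : Prop :=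
  exists h r, Ana h /\ h 0 = v /\ 0 < r /\ forall e, 0 < e < r -> F e = e ^ K * h e.

Lemma Germ_ext K F G v : (forall e, 0 < e -> F e = G e) -> Germ K F v -> Germ K G v.
Proof. intros E [h [r [H1 [H2 [H3 H4]]]]]. exists h, r. repeat split; auto. intros e He. rewrite <- E by lra. auto. Qed.

Lemma Germ_zero K : Germ K (fun _ => 0) 0.
Proof. exists (fun _ => 0), 1. repeat split; auto. apply Ana_const. lra. intros; ring. Qed.

Lemma Germ_mult K1 K2 F G v w : Germ K1 F v -> Germ K2 G w -> Germ (K1 + K2) (fun e => F e * G e) (v * w).
Proof.
  intros [h [r [H1 [H2 [H3 H4]]]]] [k [s [K1' [K2' [K3 K4]]]]].
  exists (fun x => h x * k x), (Rmin r s). repeat split.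
  - apply Ana_mult; auto.
  - simpl. rewrite H2, K2'. auto.
  - apply Rmin_pos; auto.
  - intros e He. pose proof (Rmin_l r s). pose proof (Rmin_r r s).
    rewrite H4, K4 by lra. rewrite pow_add. ring.
Qed.

Lemma Germ_plus K F G v w : Germ K F v -> Germ K G w -> Germ K (fun e => F e + G e) (v + w).
Proof.
  intros [h [r [H1 [H2 [H3 H4]]]]] [k [s [K1' [K2' [K3 K4]]]]].
  exists (fun x => h x + k x), (Rmin r s). repeat split.
  - apply Ana_plus; auto.
  - simpl. rewrite H2, K2'. auto.
  - apply Rmin_pos; auto.
  - intros e He. pose proof (Rmin_l r s). pose proof (Rmin_r r s).
    rewrite H4, K4 by lra. ring.
Qed.

Lemma Germ_lower K K2 F v : (K <= K2)%nat -> Germ K2 F v -> Germ K F (0 ^ (K2 - K) * v).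
Proof.
  intros HK [h [r [H1 [H2 [H3 H4]]]]].
  exists (fun x => x ^ (K2 - K) * h x), r. repeat split; auto.
  - apply Ana_xpow; auto.
  - simpl. rewrite H2. auto.
  - intros e He. rewrite H4 by auto. rewrite <- Rmult_assoc, <- pow_add. f_equal. f_equal. lia.
Qed.

Lemma Germ_scale K u F v : Ana u -> Germ K F v -> Germ K (fun e => u e * F e) (u 0 * v).
Proof.
  intros Hu [h [r [H1 [H2 [H3 H4]]]]].
  exists (fun x => u x * h x), r. repeat split; auto.
  - apply Ana_mult; auto.
  - simpl. rewrite H2. auto.
  - intros e He. rewrite H4 by auto. ring.
Qed.

Lemma Germ_divx K F v : Germ (S K) F v -> Germ K (fun e => F e / e) v.
Proof.
  intros [h [r [H1 [H2 [H3 H4]]]]].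
  exists h, r. repeat split; auto.
  intros e He. rewrite H4 by auto. simpl. field. lra.
Qed.

Lemma Germ_ssum K (F : nat -> R -> R) (v : nat -> R) N :
  (forall i, (i < N)%nat -> Germ K (F i) (v i)) ->
  Germ K (fun e => ssum (fun i => F i e) N) (ssum v N).
Proof.
  induction N; intros H.
  - simpl. apply Germ_zero.
  - simpl. apply (Germ_plus K (fun e => ssum (fun i => F i e) N) (F N)).
    + apply IHN. intros; apply H; lia.
    + apply H; lia.
Qed.

Lemma sqrtPI_pos : 0 < sqrt PI.
Proof. apply sqrt_lt_R0, PI_RGT_0. Qed.

Lemma a_coef_0 : a_coef O = 1.
Proof. unfold a_coef. simpl. pose proof sqrtPI_pos. field. lra. Qed.

Lemma a_coef_S p : INR (S p) * a_coef (S p) = -9 * (INR p + / 2) * a_coef p.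
Proof.
  unfold a_coef. rewrite fact_simpl, mult_INR. simpl Gamma_half. simpl pow.
  pose proof sqrtPI_pos. pose proof (INR_fact_lt_0 p). pose proof (pos_INR p).
  rewrite S_INR. field. split; lra.
Qed.

Lemma c_coef_S k : c_coef (S k) = -9 * c_coef k.
Proof. unfold c_coef. simpl. field. Qed.

Lemma U_id n : ssum (fun p => a_coef p * c_coef (n - p)) n = INR n * a_coef n / 3.
Proof.
  induction n.
  - simpl. lra.
  - cbn [ssum]. rewrite (ssum_ext _ (fun p => -9 * (a_coef p * c_coef (n - p)))).
    + rewrite ssum_scal, IHn. replace (S n - n)%nat with 1%nat by lia.
      pose proof (a_coef_S n). rewrite S_INR in *. unfold c_coef. simpl. lra.
    + intros i Hi. replace (S n - i)%nat with (S (n - i)) by lia. rewrite c_coef_S. ring.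
Qed.

Lemma W_id n : ssum (fun p => c_coef (S p) * a_coef (n - 1 - p)) n = INR n * a_coef n / 3.
Proof.
  rewrite ssum_rev, <- U_id. apply ssum_ext. intros i Hi.
  replace (S (n - 1 - i)) with (n - i)%nat by lia. replace (n - 1 - (n - 1 - i))%nat with i by lia. ring.
Qed.

Definition Tn n := ssum (fun p => a_coef p * a_coef (n - p)) (S n).
Definition Dn n := ssum (fun p => INR p * a_coef p * a_coef (n - p)) (S n).

Lemma D_eq n : 2 * Dn n = INR n * Tn n.
Proof.
  unfold Dn, Tn. rewrite <- (ssum_scal (INR n)).
  replace (2 * ssum (fun p => INR p * a_coef p * a_coef (n - p)) (S n)) with
    (ssum (fun p => INR p * a_coef p * a_coef (n - p)) (S n) + ssum (fun p => INR p * a_coef p * a_coef (n - p)) (S n)) by ring.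
  pose proof (ssum_rev (fun p => INR p * a_coef p * a_coef (n - p)) (S n)) as E.
  rewrite E at 2. rewrite <- ssum_plus. apply ssum_ext. intros i Hi.
  replace (S n - 1 - i)%nat with (n - i)%nat by lia. replace (n - (n - i))%nat with i by lia.
  rewrite (minus_INR n i) by lia. ring.
Qed.

Lemma D_S n : Dn (S n) = -9 * (Dn n + Tn n / 2).
Proof.
  unfold Dn, Tn. rewrite ssum_peel. simpl (INR 0). rewrite Rmult_0_l, Rmult_0_l, Rplus_0_l.
  rewrite (ssum_ext _ (fun p => -9 * (INR p * a_coef p * a_coef (n - p) + a_coef p * a_coef (n - p) / 2))).
  - rewrite ssum_scal, ssum_plus. f_equal. f_equal. unfold Rdiv. rewrite <- (Rmult_comm (/2)), <- ssum_scal.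
    apply ssum_ext; intros. ring.
  - intros i Hi. replace (S n - S i)%nat with (n - i)%nat by lia. rewrite a_coef_S. field.
Qed.

Lemma T_id n : Tn n = (-9) ^ n.
Proof.
  induction n.
  - unfold Tn. simpl. rewrite a_coef_0. ring.
  - pose proof (D_eq (S n)). pose proof (D_eq n). pose proof (D_S n).
    assert (HS : INR (S n) * Tn (S n) = INR (S n) * ((-9) ^ S n)).
    { rewrite <- H. rewrite H1. rewrite S_INR in *. simpl. rewrite <- IHn. lra. }
    apply Rmult_eq_reg_l in HS; auto. apply not_0_INR. lia.
Qed.

Definition kk (j : nat) : nat := (Nat.div2 j + 1)%nat.
Definition lead (j : nat) : R := if Nat.even j then c_coef (Nat.div2 j) else a_coef (Nat.div2 j).

Lemma kk_even p : kk (2 * p) = (p + 1)%nat.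
Proof. unfold kk. rewrite Nat.div2_double. auto. Qed.
Lemma kk_odd p : kk (2 * p + 1) = (p + 1)%nat.
Proof. unfold kk. rewrite Nat.div2_odd'. auto. Qed.
Lemma lead_even p : lead (2 * p) = c_coef p.
Proof. unfold lead. rewrite Nat.even_even, Nat.div2_double. auto. Qed.
Lemma lead_odd p : lead (2 * p + 1) = a_coef p.
Proof. unfold lead. rewrite Nat.even_odd, Nat.div2_odd'. auto. Qed.

Lemma div2_bounds a : (2 * Nat.div2 a <= a <= 2 * Nat.div2 a + 1)%nat.
Proof. pose proof (Nat.div2_odd a). destruct (Nat.odd a); simpl in *; lia. Qed.

Lemma kk_ineq m j : (1 <= j)%nat -> (j <= m - 1)%nat -> (Nat.div2 (m + 1) + 1 <= kk j + kk (m - j))%nat.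
Proof.
  intros. unfold kk. pose proof (div2_bounds j). pose proof (div2_bounds (m - j)). pose proof (div2_bounds (m + 1)). lia.
Qed.

Lemma V_even n : ssum (fun x => 0 ^ (kk (x + 1) + kk (2 * S n - (x + 1)) - (S n + 1)) *
                                 (lead (x + 1) * lead (2 * S n - (x + 1)))) (2 * S n - 1) = (-9) ^ n.
Proof.
  replace (2 * S n - 1)%nat with (S (2 * n)) by lia. cbn [ssum]. rewrite ssum_split.
  transitivity (ssum (fun p => a_coef p * a_coef (n - p)) n + ssum (fun _ => 0) n + a_coef n * a_coef 0).
  - f_equal; [f_equal|].
    + apply ssum_ext. intros p Hp. replace (2 * S n - (2 * p + 1))%nat with (2 * (n - p) + 1)%nat by lia.
      rewrite !kk_odd, !lead_odd. replace (p + 1 + (n - p + 1) - (S n + 1))%nat with O by lia. simpl. ring.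
    + apply ssum_ext. intros p Hp. replace (2 * p + 1 + 1)%nat with (2 * (p + 1))%nat by lia.
      replace (2 * S n - 2 * (p + 1))%nat with (2 * (n - p))%nat by lia.
      rewrite !kk_even. replace (p + 1 + 1 + (n - p + 1) - (S n + 1))%nat with 1%nat by lia. simpl. ring.
    + replace (2 * S n - (2 * n + 1))%nat with (2 * 0 + 1)%nat by lia.
      rewrite kk_odd, kk_odd, lead_odd, lead_odd. replace (n + 1 + (0 + 1) - (S n + 1))%nat with O by lia.
      simpl. ring.
  - rewrite ssum_zero, <- T_id. unfold Tn. cbn [ssum]. rewrite Nat.sub_diag. ring.
Qed.

Lemma V_odd n : ssum (fun x => 0 ^ (kk (x + 1) + kk (2 * n + 1 - (x + 1)) - (n + 2)) *
                                 (lead (x + 1) * lead (2 * n + 1 - (x + 1)))) (2 * n + 1 - 1) = 2 * (INR n * a_coef n / 3).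
Proof.
  replace (2 * n + 1 - 1)%nat with (2 * n)%nat by lia. rewrite ssum_split.
  transitivity (ssum (fun p => a_coef p * c_coef (n - p)) n + ssum (fun p => c_coef (S p) * a_coef (n - 1 - p)) n).
  - f_equal.
    + apply ssum_ext. intros p Hp. replace (2 * n + 1 - (2 * p + 1))%nat with (2 * (n - p))%nat by lia.
      rewrite kk_odd, kk_even, lead_odd, lead_even. replace (p + 1 + (n - p + 1) - (n + 2))%nat with O by lia. simpl. ring.
    + apply ssum_ext. intros p Hp. replace (2 * p + 1 + 1)%nat with (2 * (p + 1))%nat by lia.
      replace (2 * n + 1 - 2 * (p + 1))%nat with (2 * (n - 1 - p) + 1)%nat by lia.
      rewrite kk_even, kk_odd, lead_even, lead_odd. replace (p + 1 + 1 + (n - 1 - p + 1) - (n + 2))%nat with O by lia.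
      replace (p + 1)%nat with (S p) by lia. simpl. ring.
  - rewrite U_id, W_id. ring.
Qed.

Lemma Ana_1x : Ana (fun x => 1 + x).
Proof. apply Ana_plus; [apply Ana_const|apply Ana_id]. Qed.
Lemma Ana_3x : Ana (fun x => 3 + x).
Proof. apply Ana_plus; [apply Ana_const|apply Ana_id]. Qed.

Lemma main_germ (Rb : nat -> R -> R) (HR : is_Rbar_family Rb) m :
  (1 <= m)%nat -> Germ (kk m) (Rb m) (lead m).
Proof.
  destruct HR as [HR1 HRm].
  induction m as [m IH] using Wf_nat.lt_wf_ind. intros Hm.
  destruct (Nat.eq_dec m 1) as [->|Hm1].
  { exists (fun _ => 1), 1. repeat split.
    - apply Ana_const.
    - unfold lead. simpl. rewrite a_coef_0. auto.
    - lra.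
    - intros e He. rewrite HR1 by lra. unfold kk. simpl. ring. }
  assert (Hm2 : (2 <= m)%nat) by lia.
  assert (HG : Germ (Nat.div2 (m + 1) + 1)
     (fun e => ssum (fun x => Rb (x + 1)%nat e * Rb (m - (x + 1))%nat e) (m - 1))
     (ssum (fun x => 0 ^ (kk (x + 1) + kk (m - (x + 1)) - (Nat.div2 (m + 1) + 1)) * (lead (x + 1) * lead (m - (x + 1)))) (m - 1))).
  { apply (Germ_ssum _ (fun x e => Rb (x + 1)%nat e * Rb (m - (x + 1))%nat e)). intros x Hx.
    apply Germ_lower. apply kk_ineq; lia. apply Germ_mult; apply IH; lia. }
  assert (HS : forall e, sum_f 1 (m - 1) (fun j => Rb j e * Rb (m - j)%nat e) =
                         ssum (fun x => Rb (x + 1)%nat e * Rb (m - (x + 1))%nat e) (m - 1)).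
  { intros. unfold sum_f. rewrite ssum_sumR. replace (S (m - 1 - 1)) with (m - 1)%nat by lia. reflexivity. }
  destruct (Nat.Even_or_Odd m) as [[n Hn]|[n Hn]]; subst m.
  -
    destruct n as [|n]; [lia|].
    replace (Nat.div2 (2 * S n + 1) + 1)%nat with (S n + 1)%nat in HG by (rewrite Nat.div2_odd'; lia).
    rewrite V_even in HG.
    set (u := fun e => - (3 + e) * / ((1 + e) ^ (2 * S n) + (1 + e))).
    assert (Hu : Ana u).
    { apply Ana_mult. apply Ana_ext with (fun x => -1 * (3 + x)). apply Ana_scal, Ana_3x. intros; ring.
      apply Ana_inv. apply Ana_plus. apply Ana_pow, Ana_1x. apply Ana_1x.
      rewrite Rplus_0_r, pow1. lra. }
    pose proof (Germ_scale _ u _ _ Hu HG) as HG2.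
    rewrite kk_even, lead_even.
    replace (c_coef (S n)) with (u 0 * (-9) ^ n).
    2: { unfold u, c_coef. rewrite !Rplus_0_r, pow1. simpl. field. }
    revert HG2. apply Germ_ext. intros e He.
    pose proof (HRm (2 * S n)%nat e ltac:(lia) He) as Hrec.
    rewrite pow_1_even, Rmult_1_l, HS in Hrec.
    assert (0 < (1 + e) ^ (2 * S n)) by (apply pow_lt; lra).
    unfold u. cbv beta.
    apply (Rmult_eq_reg_l ((1 + e) ^ (2 * S n) + (1 + e))); [rewrite Hrec; field; lra | lra].
  -
    destruct n as [|n]; [lia|].
    replace (Nat.div2 (2 * S n + 1 + 1) + 1)%nat with (S n + 2)%nat in HG
      by (replace (2 * S n + 1 + 1)%nat with (2 * (S n + 1))%nat by lia; rewrite Nat.div2_double; lia).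
    rewrite V_odd in HG. replace (S n + 2)%nat with (S (S n + 1)) in HG by lia.
    apply Germ_divx in HG.
    set (N := (2 * S n - 1)%nat).
    set (u := fun e => (3 + e) * / ((1 + e) * sum_f_R0 (fun i => (1 + e) ^ i) N)).
    assert (Hs0 : sum_f_R0 (fun i => (1 + 0) ^ i) N = 2 * INR (S n)).
    { rewrite (sum_eq _ (fun _ => 1)). rewrite sum_cte. unfold N. replace (S (2 * S n - 1)) with (2 * S n)%nat by lia.
      rewrite mult_INR. simpl (INR 2). ring. intros; rewrite Rplus_0_r, pow1; auto. }
    assert (Hu : Ana u).
    { apply Ana_mult. apply Ana_3x.
      apply Ana_inv. apply Ana_mult. apply Ana_1x. apply (Ana_sumR (fun i x => (1 + x) ^ i)). intros; apply Ana_pow, Ana_1x.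
      rewrite Hs0, !Rplus_0_r. pose proof (pos_INR n). rewrite S_INR. lra. }
    pose proof (Germ_scale _ u _ _ Hu HG) as HG2.
    rewrite kk_odd, lead_odd.
    replace (a_coef (S n)) with (u 0 * (2 * (INR (S n) * a_coef (S n) / 3))).
    2: { unfold u. rewrite Hs0, !Rplus_0_r. pose proof (pos_INR n). rewrite S_INR in *. field. lra. }
    revert HG2. apply Germ_ext. intros e He.
    pose proof (HRm (2 * S n + 1)%nat e ltac:(lia) He) as Hrec.
    rewrite HS in Hrec. replace (2 * S n + 1)%nat with (S (2 * S n)) in Hrec by lia.
    rewrite pow_1_odd in Hrec.
    set (S0 := sum_f_R0 (fun i => (1 + e) ^ i) N) in *.
    pose proof (GP_finite (1 + e) N) as HGP. fold S0 in HGP.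
    replace (N + 1)%nat with (2 * S n)%nat in HGP by (unfold N; lia).
    assert (HP : 1 < (1 + e) ^ (2 * S n)) by (apply Rlt_pow_R1; lia || lra).
    replace (1 + e - 1) with e in HGP by ring.
    assert (HS0 : 0 < S0) by nra.
    assert (HC : -1 * (1 + e) ^ S (2 * S n) + (1 + e) = - ((1 + e) * S0 * e)).
    { change ((1 + e) ^ S (2 * S n)) with ((1 + e) * (1 + e) ^ (2 * S n)). nra. }
    rewrite HC in Hrec. unfold u. fold S0. cbv beta. replace (2 * S n + 1)%nat with (S (2 * S n)) by lia.
    apply (Rmult_eq_reg_l (- ((1 + e) * S0 * e))).
    + rewrite Hrec. field. repeat split; lra.
    + assert (0 < (1 + e) * S0 * e) by (apply Rmult_lt_0_compat; [apply Rmult_lt_0_compat|]; lra). lra.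
Qed.

Lemma Germ_analytic K F v : Germ K F v -> analytic_at_0 F.
Proof.
  intros [h [r [H1 [H2 [H3 H4]]]]].
  destruct (Ana_xpow K h H1) as [a [s [K1 [K2 K3]]]].
  exists a, (Rmin r s). split; [apply Rmin_pos; auto|split].
  - eapply Rbar_lt_shrink; [apply Rmin_r|exact K2].
  - intros e He. pose proof (Rmin_l r s). pose proof (Rmin_r r s).
    rewrite H4 by lra. apply K3. rewrite Rabs_pos_eq; lra.
Qed.

Lemma Germ_bound K F v : Germ K F v -> exists C d, 0 < d /\
  forall e, 0 < e < d -> Rabs (F e - e ^ K * v) <= C * e ^ (K + 2 - 1).
Proof.
  intros [h [r [H1 [H2 [H3 H4]]]]].
  destruct (Ana_lip h H1) as [C [d [Hd HC]]].
  exists C, (Rmin r d). split; [apply Rmin_pos; auto|].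
  intros e He. pose proof (Rmin_l r d). pose proof (Rmin_r r d).
  rewrite H4 by lra. rewrite <- H2. replace (e ^ K * h e - e ^ K * h 0) with (e ^ K * (h e - h 0)) by ring.
  assert (0 < e ^ K) by (apply pow_lt; lra).
  rewrite Rabs_mult, (Rabs_pos_eq (e ^ K)) by lra.
  replace (K + 2 - 1)%nat with (S K) by lia. simpl.
  specialize (HC e ltac:(rewrite Rabs_pos_eq; lra)). rewrite (Rabs_pos_eq e) in HC by lra.
  apply Rle_trans with (e ^ K * (C * e)). apply Rmult_le_compat_l; lra. right; ring.
Qed.

Lemma a_bound n : Rabs (a_coef n) <= 9 ^ n.
Proof.
  induction n.
  - rewrite a_coef_0, Rabs_R1. simpl. lra.
  - pose proof (a_coef_S n) as E. pose proof (pos_INR n).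
    assert (Ea : a_coef (S n) = -9 * ((INR n + / 2) / INR (S n)) * a_coef n).
    { apply (Rmult_eq_reg_l (INR (S n))). rewrite E. field. rewrite S_INR; lra. rewrite S_INR; lra. }
    rewrite Ea, !Rabs_mult. rewrite (Rabs_pos_eq ((INR n + / 2) / INR (S n))).
    2: { apply Rdiv_le_0_compat. lra. rewrite S_INR; lra. }
    assert ((INR n + / 2) / INR (S n) <= 1).
    { rewrite S_INR. apply Rmult_le_reg_r with (INR n + 1); [lra|]. field_simplify; lra. }
    replace (Rabs (-9)) with 9 by (rewrite Rabs_left; lra).
    change (9 ^ S n) with (9 * 9 ^ n). pose proof (Rabs_pos (a_coef n)).
    apply Rle_trans with (9 * 1 * Rabs (a_coef n)). apply Rmult_le_compat_r; [auto|]. apply Rmult_le_compat_l; lra.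
    lra.
Qed.

Lemma a_radius : Rbar_le (/ 9) (CV_radius a_coef).
Proof.
  replace (/ 9) with (Rabs (/ 9)) by (rewrite Rabs_pos_eq; lra).
  apply bounded_radius with 1. intros n. rewrite Rabs_mult, <- RPow_abs.
  rewrite (Rabs_pos_eq (/ 9)) by lra.
  apply Rle_trans with (9 ^ n * (/ 9) ^ n). apply Rmult_le_compat_r. apply pow_le; lra. apply a_bound.
  rewrite <- Rpow_mult_distr, Rinv_r, pow1 by lra. lra.
Qed.

Lemma A_in x : Rabs x < / 9 -> Rbar_lt (Rabs x) (CV_radius a_coef).
Proof. intros H. eapply Rbar_lt_le_trans; [|apply a_radius]. simpl. auto. Qed.

Lemma A_sq x : Rabs x < / 9 -> PSeries a_coef x * PSeries a_coef x = / (1 + 9 * x).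
Proof.
  intros Hx. rewrite <- PSeries_mult by (apply A_in; auto).
  rewrite (PSeries_ext _ (fun n => (-9) ^ n)).
  - apply is_pseries_unique. apply is_pseries_R.
    apply (is_series_ext (fun n => (-9 * x) ^ n)). intros n. rewrite Rpow_mult_distr; reflexivity.
    replace (1 + 9 * x) with (1 - (-9 * x)) by ring. apply is_series_geom.
    rewrite Rabs_mult, Rabs_left by lra. lra.
  - intros n. unfold PS_mult. rewrite ssum_sumR. apply T_id.
Qed.

Lemma A_pos x : Rabs x < / 9 -> 0 < PSeries a_coef x.
Proof.
  intros Hx.
  assert (Hnz : forall y, Rabs y < / 9 -> PSeries a_coef y <> 0).
  { intros y Hy E. pose proof (A_sq y Hy) as Q. rewrite E, Rmult_0_l in Q.
    assert (0 < 1 + 9 * y) by (apply Rabs_def2 in Hy; lra).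
    assert (0 < / (1 + 9 * y)) by (apply Rinv_0_lt_compat; auto). lra. }
  assert (Hc : forall y, Rabs y < / 9 -> continuity_pt (PSeries a_coef) y).
  { intros y Hy. apply PSeries_continuity, A_in; auto. }
  assert (H0 : PSeries a_coef 0 = 1) by (rewrite PSeries_0; apply a_coef_0).
  destruct (Rlt_or_le 0 (PSeries a_coef x)) as [P|P]; auto. exfalso.
  assert (N : PSeries a_coef x < 0) by (destruct P; auto; exfalso; apply (Hnz x); auto).
  apply Rabs_def2 in Hx. destruct (Rtotal_order x 0) as [Hl|[He|Hg]].
  - destruct (IVT_interv (PSeries a_coef) x 0) as [z [Hz Ez]]; auto.
    + intros y Hy. apply Hc. apply Rabs_def1; lra.
    + lra.
    + apply (Hnz z); auto. apply Rabs_def1; lra.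
  - subst. lra.
  - destruct (IVT_interv (fun t => - PSeries a_coef t) 0 x) as [z [Hz Ez]]; auto.
    + intros y Hy. apply continuity_pt_opp, Hc. apply Rabs_def1; lra.
    + lra.
    + lra.
    + apply (Hnz z). apply Rabs_def1; lra. lra.
Qed.

Lemma A_val x : Rabs x < / 9 -> PSeries a_coef x = / sqrt (1 + 9 * x).
Proof.
  intros Hx. rewrite <- sqrt_inv, <- A_sq by auto. rewrite sqrt_square; auto.
  left. apply A_pos; auto.
Qed.

Lemma series1 tau : Rabs tau < / 3 ->
  is_series (fun m : nat => a_coef m * tau ^ (2 * m + 1)) (tau / sqrt (1 + 9 * tau ^ 2)).
Proof.
  intros Ht.
  assert (Hx : Rabs (tau ^ 2) < / 9).
  { rewrite <- RPow_abs. pose proof (Rabs_pos tau). simpl. nra. }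
  pose proof (PSeries_correct _ _ (CV_radius_inside _ _ (A_in _ Hx))) as P.
  apply is_pseries_R in P. rewrite A_val in P by auto.
  apply (is_series_scal_l tau) in P.
  unfold Rdiv.
  replace (tau * / sqrt (1 + 9 * tau ^ 2)) with (scal tau (/ sqrt (1 + 9 * tau ^ 2))) by reflexivity.
  revert P. apply is_series_ext. intros n. rewrite pow_add, pow_mult.
  change (scal tau (a_coef n * (tau ^ 2) ^ n)) with (tau * (a_coef n * (tau ^ 2) ^ n)).
  match goal with |- ?a = ?b => change (@eq R a b) end. ring.
Qed.

Lemma series2 tau : Rabs tau < / 3 ->
  is_series (fun k : nat => c_coef (S k) * tau ^ (2 * S k)) (- (3 / 2) * (tau ^ 2 / (1 + 9 * tau ^ 2))).
Proof.
  intros Ht.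
  assert (Hx : Rabs (-9 * tau ^ 2) < 1).
  { rewrite Rabs_mult, <- RPow_abs. pose proof (Rabs_pos tau). rewrite Rabs_left by lra. simpl. nra. }
  pose proof (is_series_geom _ Hx) as P.
  apply (is_series_scal_l (- (3 / 2) * tau ^ 2)) in P.
  replace (- (3 / 2) * (tau ^ 2 / (1 + 9 * tau ^ 2))) with (scal (- (3 / 2) * tau ^ 2) (/ (1 - -9 * tau ^ 2))).
  2: { change (scal (- (3 / 2) * tau ^ 2) (/ (1 - -9 * tau ^ 2))) with (- (3 / 2) * tau ^ 2 * / (1 - -9 * tau ^ 2)).
       replace (1 - -9 * tau ^ 2) with (1 + 9 * tau ^ 2) by ring. unfold Rdiv.
       match goal with |- ?a = ?b => change (@eq R a b) end. ring. }
  revert P. apply is_series_ext. intros n. rewrite pow_mult, Rpow_mult_distr.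
  change (scal (- (3 / 2) * tau ^ 2) ((-9) ^ n * (tau ^ 2) ^ n)) with (- (3 / 2) * tau ^ 2 * ((-9) ^ n * (tau ^ 2) ^ n)).
  unfold c_coef. change ((-9) ^ S n) with (-9 * (-9) ^ n). change ((tau ^ 2) ^ S n) with (tau ^ 2 * (tau ^ 2) ^ n).
  match goal with |- ?a = ?b => change (@eq R a b) end. field.
Qed.

Theorem mainTheorem2 (Rb : nat -> R -> R) (HR : is_Rbar_family Rb) :
  (forall m : nat, (1 <= m)%nat -> analytic_at_0 (Rb m)) /\
  (forall m : nat, exists C delta : R, 0 < delta /\
     forall e, 0 < e < delta ->
       Rabs (Rb (2 * m + 1)%nat e - e ^ (m + 1) * a_coef m) <= C * e ^ (m + 2)) /\
  (forall n : nat, (1 <= n)%nat -> exists C delta : R, 0 < delta /\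
     forall e, 0 < e < delta ->
       Rabs (Rb (2 * n)%nat e - e ^ (n + 1) * c_coef n) <= C * e ^ (n + 2)) /\
  (forall tau : R, Rabs tau < / 3 ->
     is_series (fun m : nat => a_coef m * tau ^ (2 * m + 1))
               (tau / sqrt (1 + 9 * tau ^ 2)) /\
     is_series (fun k : nat => c_coef (S k) * tau ^ (2 * S k))
               (- (3 / 2) * (tau ^ 2 / (1 + 9 * tau ^ 2)))).
Proof.
  split; [|split; [|split]].
  - intros m Hm. apply (Germ_analytic _ _ _ (main_germ Rb HR m Hm)).
  - intros m. pose proof (main_germ Rb HR (2 * m + 1) ltac:(lia)) as G.
    rewrite kk_odd, lead_odd in G. destruct (Germ_bound _ _ _ G) as [C [d [Hd HB]]].
    exists C, d. split; auto. intros e He. specialize (HB e He).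
    replace (m + 1 + 2 - 1)%nat with (m + 2)%nat in HB by lia. exact HB.
  - intros n Hn. pose proof (main_germ Rb HR (2 * n) ltac:(lia)) as G.
    rewrite kk_even, lead_even in G. destruct (Germ_bound _ _ _ G) as [C [d [Hd HB]]].
    exists C, d. split; auto. intros e He. specialize (HB e He).
    replace (n + 1 + 2 - 1)%nat with (n + 2)%nat in HB by lia. exact HB.
  - intros tau Ht. split; [apply series1|apply series2]; auto.
Qed.
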